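(* Let $K\subseteq\mathbb{R}^d$ be a convex body, $\Lambda\subseteq\mathbb{R}^d$ a lattice with basis $\{f_1,\dots,f_d\}$, and $i\in\{1,\dots,d\}$. For each $i$-element subset $I\subseteq\{1,\dots,d\}$ let $L_I=\operatorname{span}_{\mathbb{R}}\{f_k: k\in I\}$. If $\dim(K\cap L_I)=i$ for every $i$-element subset $I$, then $$\mu_i(K,\Lambda)\leqslant\max\Big\{\mu(K\cap L_I,\Lambda\cap L_I): I\subseteq\{1,\dots,d\},\ |I|=i\Big\}.$$
   Context: A convex body is a full-dimensional compact convex set; a lattice is a full-rank discrete subgroup. For a convex body $K\subseteq\mathbb{R}^d$ and $i\in\{1,\dots,d\}$, $\mu_i(K,\Lambda)=\min\{\mu\ge0: (\mu K+\Lambda)\cap U\ne\emptyset$ for every $(d-i)$-dimensional affine subspace $U\subseteq\mathbb{R}^d\}$. For a $k$-dimensional real vector space $E$, a lattice $\Gamma\subseteq E$ and a convex body $C\subseteq E$, the covering radius is $\mu(C,\Gamma)=\min\{\mu\ge0:\mu C+\Gamma=E\}$; here $\mu(K\cap L_I,\Lambda\cap L_I)$ is computed inside $L_I$. *)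

(* Defs.v *)
From HB Require Import structures.
From mathcomp Require Import all_boot all_order all_algebra.
From mathcomp Require Import all_classical all_reals all_analysis.
Set Implicit Arguments. Unset Strict Implicit. Unset Printing Implicit Defensive.
Import Order.TTheory GRing.Theory Num.Theory.
Import numFieldNormedType.Exports.
Local Open Scope classical_set_scope.
Local Open Scope ring_scope.

Section Defs.
Variables (R : realType) (d : nat).
Notation V := 'rV[R]_d.

Definition convex_subset (K : set V) : Prop :=
  forall x y t, K x -> K y -> 0 <= t -> t <= 1 -> K (t *: x + (1 - t) *: y).

Definition convex_body (K : set V) : Prop :=
  [/\ convex_subset K, compact K & (interior K) !=set0].

Definition lattice_of (f : 'M[R]_d) : set V :=
  [set x | exists z : 'I_d -> int, x = \sum_(k < d) (z k)%:~R *: row k f].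

Definition span_rows (f : 'M[R]_d) (I : {set 'I_d}) : set V :=
  [set x | exists c : 'I_d -> R, x = \sum_(k in I) c k *: row k f].

(* S contains k+1 affinely independent points *)
Definition has_aff_indep (S : set V) (k : nat) : Prop :=
  exists (p : V) (A : 'M[R]_(k, d)), [/\ S p, row_free A & forall j, S (p + row j A)].

Definition set_dim (S : set V) (k : nat) : Prop :=
  has_aff_indep S k /\ ~ has_aff_indep S k.+1.

Definition affine_subspace (U : set V) (k : nat) : Prop :=
  exists (p : V) (A : 'M[R]_(k, d)), row_free A /\ U = [set p + y *m A | y in [set: 'rV[R]_k]].

Definition dil_plus (mu : R) (K L : set V) : set V :=
  [set x | exists c g, [/\ K c, L g & x = mu *: c + g]].

Definition covering_minimum (K L : set V) (i : nat) : R :=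
  inf [set mu : R | 0 <= mu /\
        forall U, affine_subspace U (d - i) -> (dil_plus mu K L `&` U) !=set0].

Definition covering_radius_in (E C G : set V) : R :=
  inf [set mu : R | 0 <= mu /\ dil_plus mu C G = E].

End Defs.

(* Main.v *)
Require Import Defs.
From HB Require Import structures.
From mathcomp Require Import all_boot all_order all_algebra.
From mathcomp Require Import all_classical all_reals all_analysis.
From mathcomp Require Import zify ring lra.
Import Order.TTheory GRing.Theory Num.Theory.
Local Open Scope classical_set_scope.
Local Open Scope ring_scope.
Set Implicit Arguments. Unset Strict Implicit. Unset Printing Implicit Defensive.

Definition MI (R : realType) (d : nat) (f : 'M[R]_d) (I : {set 'I_d}) : 'M[R]_d :=
  \matrix_(k, j) (if k \in I then f k j else 0).

Lemma row_MI (R : realType) (d : nat) (f : 'M[R]_d) (I : {set 'I_d}) (k : 'I_d) :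
  row k (MI f I) = if k \in I then row k f else 0.
Proof. by apply/rowP => j; rewrite !mxE; case: ifP => _; rewrite ?mxE. Qed.

Lemma spanE (R : realType) (d : nat) (f : 'M[R]_d) (I : {set 'I_d}) (x : 'rV[R]_d) :
  span_rows f I x <-> (x <= MI f I)%MS.
Proof.
split.
  move=> [c ->]; apply: summx_sub => k kI; apply: scalemx_sub.
  by have := row_sub k (MI f I); rewrite row_MI kI.
move/submxP => [y ->]; exists (fun k => y 0 k).
rewrite mulmx_sum_row [RHS]big_mkcond /=; apply: eq_bigr => k _.
by rewrite row_MI; case: ifP => _; rewrite ?scaler0.
Qed.

Lemma span_lin (R : realType) (d : nat) (f : 'M[R]_d) (I : {set 'I_d}) (x y : 'rV[R]_d) a b :
  span_rows f I x -> span_rows f I y -> span_rows f I (a *: x + b *: y).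
Proof.
move=> /spanE hx /spanE hy; apply/spanE.
by rewrite addmx_sub // scalemx_sub.
Qed.

Lemma convex_comb (R : realType) (d : nat) (K : set 'rV[R]_d) (p : 'rV[R]_d) n
  (a : 'I_n -> 'rV[R]_d) (lam : 'I_n -> R) :
  convex_subset K -> K p -> (forall j, K (p + a j)) -> (forall j, 0 <= lam j) ->
  \sum_j lam j <= 1 -> K (p + \sum_j lam j *: a j).
Proof.
move=> cK Kp; elim: n a lam => [|n IH] a lam Ka lam0 lam1.
  by rewrite big_ord0 addr0.
rewrite big_ord_recr /=; rewrite big_ord_recr /= in lam1.
set s := lam ord_max.
have s0 : 0 <= s by apply: lam0.
have S0 : 0 <= \sum_(i < n) lam (widen_ord (leqnSn n) i) by apply: sumr_ge0.
have [s1|s1] := eqVneq s 1.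
  have Z : forall i : 'I_n, lam (widen_ord (leqnSn n) i) = 0.
    move=> i; apply: (psumr_eq0P (P := xpredT)
       (F := fun i : 'I_n => lam (widen_ord (leqnSn n) i))) => //.
    by apply: le_anti; rewrite S0 andbT; move: lam1; rewrite -/s s1; lra.
  rewrite big1 ?add0r; last by move=> i _; rewrite Z scale0r.
  by rewrite s1 scale1r.
have s1' : s < 1.
  have : s <= 1 by move: lam1; rewrite -/s; lra.
  by rewrite le_eqVlt (negbTE s1).
set lam' := fun i : 'I_n => lam (widen_ord (leqnSn n) i) / (1 - s).
have := IH (fun i => a (widen_ord (leqnSn n) i)) lam' (fun j => Ka _).
move=> /(_ _ _) H.
have H' : K (p + \sum_(i < n) lam' i *: a (widen_ord (leqnSn n) i)).
  apply: H.
    by move=> j; rewrite /lam' divr_ge0 // subr_ge0 ltW.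
  rewrite /lam' -mulr_suml ler_pdivrMr ?subr_gt0 // mul1r.
  by move: lam1; rewrite -/s lerBrDr => h; exact: h.
have := cK _ _ s (Ka ord_max) H' s0 (ltW s1').
congr K.
rewrite !scalerDr scaler_sumr.
have -> : \sum_(i < n) (1 - s) *: (lam' i *: a (widen_ord (leqnSn n) i)) =
          \sum_(i < n) lam (widen_ord (leqnSn n) i) *: a (widen_ord (leqnSn n) i).
  apply: eq_bigr => i _; rewrite scalerA /lam' mulrC divfK //.
  by rewrite subr_eq0 eq_sym.
rewrite scalerBl scale1r.
set T := \sum_(i < n) _; set u := s *: p; set v := s *: a ord_max.
rewrite addrC !addrA; congr (_ + _).
by rewrite addrAC (addrAC u) subrr add0r addrC.
Qed.

Lemma MI_sub (R : realType) (d : nat) (f : 'M[R]_d) (I J : {set 'I_d}) :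
  I \subset J -> (MI f I <= MI f J)%MS.
Proof.
move=> sIJ; apply/row_subP => k; rewrite row_MI; case: ifP => kI; last exact: sub0mx.
by have := row_sub k (MI f J); rewrite row_MI (fintype.subsetP sIJ _ kI).
Qed.

Lemma rowf_MI (R : realType) (d : nat) (f : 'M[R]_d) (I : {set 'I_d}) (k : 'I_d) :
  k \in I -> (row k f <= MI f I)%MS.
Proof. by move=> kI; have := row_sub k (MI f I); rewrite row_MI kI. Qed.

Lemma rank_MI (R : realType) (d : nat) (f : 'M[R]_d) (I : {set 'I_d}) :
  (\rank (MI f I) <= #|I|)%N.
Proof.
have sub : (MI f I <= \sum_(k in I) <<row k f>>)%MS.
  apply/row_subP => k; rewrite row_MI; case: ifP => kI; last exact: sub0mx.
  by apply: (sumsmx_sup k) => //; rewrite genmxE.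
apply: leq_trans (mxrankS sub) _.
rewrite -sum1_card.
elim/big_rec2: _ => [|k A n kI IH]; first by rewrite mxrank0.
have := (mxrank_adds_leqif <<row k f>>%MS A).1.
rewrite mxrank_gen => h; apply: leq_trans h _; have := rank_leq_row (row k f); lia.
Qed.

Lemma complement (R : realType) (d i : nat) (f : 'M[R]_d) (B : 'M[R]_(d - i, d)) :
  row_free f -> row_free B -> (i <= d)%N ->
  exists I : {set 'I_d}, #|I| = i /\ forall x : 'rV[R]_d, (x <= B + MI f I)%MS.
Proof.
move=> rf rB id.
have main : forall n, (n <= i)%N -> exists I : {set 'I_d},
    #|I| = n /\ (d - i + n <= \rank (B + MI f I))%N.
  elim=> [_|n IH ni].
    exists finset.set0; split; first by rewrite cards0.
    have -> : MI f finset.set0 = 0 by apply/matrixP => k j; rewrite !mxE finset.in_set0.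
    by rewrite addsmx0 addn0 (eqP rB).
  have [I [cI rI]] := IH (ltnW ni).
  set X := (B + MI f I)%MS.
  have {}rI : (d - i + n <= \rank X)%N := rI.
  have rX : (\rank X <= d)%N := rank_leq_col X.
  have [k kI kX] : exists2 k, k \notin I & (\rank X < d)%N ==> ~~ (row k f <= X)%MS.
    case: (ltnP (\rank X) d) => hX /=.
      have : ~~ (f <= X)%MS.
        by apply/negP => fX; have := mxrankS fX; rewrite (eqP rf); lia.
      case/row_subPn => k nk; exists k => //.
      apply/negP => kI; apply: (negP nk); apply: submx_trans (rowf_MI f kI) _.
      exact: addsmxSr.
    have : (~: I) != finset.set0.
      by rewrite -card_gt0; have := cardsC I; rewrite card_ord; lia.
    by case/set0Pn => k; rewrite finset.in_setC => kI; exists k.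
  exists (k |: I); split; first by rewrite cardsU1 kI cI.
  set Y := (B + MI f (k |: I))%MS.
  have XY : (X <= Y)%MS by apply: addsmxS => //; apply: MI_sub; apply: finset.subsetUr.
  case: (ltnP (\rank X) d) kX => hX /= kX.
    have kY : (row k f <= Y)%MS.
      by apply: submx_trans (rowf_MI f (setU11 k I)) (addsmxSr _ _).
    have YX : ~~ (Y <= X)%MS by apply: contra kX => YX; apply: submx_trans YX.
    have : (X < Y)%MS by rewrite ltmxE XY.
    rewrite ltmxErank XY /= => h; lia.
  have := mxrankS XY; lia.
have [I [cI rI]] := main i (leqnn i).
exists I; split => // x; apply: submx_full.
by rewrite /row_full eqn_leq rank_leq_col /=; lia.
Qed.

Lemma zid (V : zmodType) (x a c g : V) : x = a + (c + (x - a - c - g)) + g.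
Proof. by rewrite -(addrA a) -(addrA c) subrK (addrC c) subrK (addrC a) subrK. Qed.

Lemma span_add (R : realType) (d : nat) (f : 'M[R]_d) (I : {set 'I_d}) (x y : 'rV[R]_d) :
  span_rows f I x -> span_rows f I y -> span_rows f I (x + y).
Proof. by move=> hx hy; have := span_lin 1 1 hx hy; rewrite !scale1r. Qed.

Lemma span_sub (R : realType) (d : nat) (f : 'M[R]_d) (I : {set 'I_d}) (x y : 'rV[R]_d) :
  span_rows f I x -> span_rows f I y -> span_rows f I (x - y).
Proof. by move=> hx hy; have := span_lin 1 (-1) hx hy; rewrite scale1r scaleN1r. Qed.

Lemma span_scale (R : realType) (d : nat) (f : 'M[R]_d) (I : {set 'I_d}) (x : 'rV[R]_d) a :
  span_rows f I x -> span_rows f I (a *: x).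
Proof. by move=> hx; have := span_lin a 0 hx hx; rewrite scale0r addr0. Qed.

Lemma cov_ne (R : realType) (d : nat) (K : set 'rV[R]_d) (f : 'M[R]_d) (I : {set 'I_d}) :
  convex_subset K -> (1 <= #|I|)%N -> has_aff_indep (K `&` span_rows f I) #|I| ->
  exists mu : R, 0 <= mu /\
    dil_plus mu (K `&` span_rows f I) (lattice_of f `&` span_rows f I) = span_rows f I.
Proof.
move=> cK i1 [p [A [[Kp Lp] rA HA]]].
have rowL : forall j, span_rows f I (row j A).
  move=> j; have [_ Lj] := HA j; have := span_sub Lj Lp.
  by rewrite (addrC p) addrK.
have AM : (A <= MI f I)%MS by apply/row_subP => j; apply/spanE.
have MA : (MI f I <= A)%MS.
  case: (mxrank_leqif_sup AM) => _ <-.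
  by rewrite eqn_leq mxrankS //= (eqP rA) rank_MI.
pose b := fun k : 'I_d => row k f *m pinvmx A.
have bA : forall k, k \in I -> row k f = b k *m A.
  by move=> k kI; rewrite mulmxKpV // (submx_trans (rowf_MI f kI) MA).
pose M := \sum_(k < d) \sum_(j < #|I|) `|b k 0 j|.
have M0 : 0 <= M by apply: sumr_ge0 => k _; apply: sumr_ge0 => j _.
pose N : R := (#|I|)%:R.
have N1 : 1 <= N by rewrite ler1n.
pose mu := 2 * N * M + 1.
have mu0 : 0 < mu by rewrite /mu; nra.
exists mu; split; first exact: ltW.
apply/seteqP; split.
  move=> x [c [g [[Kc Lc] [_ Lg] ->]]].
  by apply: span_add => //; apply: span_scale.
move=> x Lx.
pose ctr := (mu / (2 * N)) *: \sum_(j < #|I|) row j A.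
have Lsum : forall (lam : 'I_#|I| -> R), span_rows f I (\sum_j lam j *: row j A).
  move=> lam; apply/spanE; apply: summx_sub => j _; apply: scalemx_sub.
  by apply/spanE; exact: rowL.
have Lctr : span_rows f I ctr.
  by rewrite /ctr scaler_sumr; apply: Lsum.
have Ly : span_rows f I (x - mu *: p - ctr).
  by apply: span_sub => //; apply: span_sub => //; apply: span_scale.
case: Ly => c Ey.
pose z := fun k : 'I_d => if k \in I then Num.floor (c k) else 0.
pose g := \sum_(k < d) (z k)%:~R *: row k f.
have gI : g = \sum_(k in I) (Num.floor (c k))%:~R *: row k f.
  rewrite /g [RHS]big_mkcond /=; apply: eq_bigr => k _; rewrite /z.
  by case: ifP => _; rewrite ?scale0r.
have Lg : span_rows f I g by rewrite gI; eexists.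
have Gg : lattice_of f g by exists z.
pose t := fun k => c k - (Num.floor (c k))%:~R.
have t01 : forall k, 0 <= t k <= 1.
  move=> k; have /andP[h1 h2] := floor_itv (c k).
  rewrite intrD in h2; rewrite /t; apply/andP; split; lra.
pose beta := \sum_(k in I) t k *: b k.
have ygw : x - mu *: p - ctr - g = beta *m A.
  rewrite Ey gI /beta mulmx_suml -sumrB; apply: eq_bigr => k kI.
  by rewrite -scalerBl -scalemxAl -bA.
have wsum : beta *m A = \sum_j beta 0 j *: row j A := mulmx_sum_row _ _.
pose lam := fun j => (mu + 2 * N * beta 0 j) / (2 * N * mu).
have beta_bd : forall j, `|beta 0 j| <= M.
  move=> j; rewrite /beta summxE.
  apply: le_trans (ler_norm_sum _ _ _) _.
  apply: (@le_trans _ _ (\sum_(k in I) `|b k 0 j|)).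
    apply: ler_sum => k _; rewrite mxE normrM.
    have /andP[h1 h2] := t01 k; have := normr_ge0 (b k 0 j).
    rewrite ger0_norm //; nra.
  apply: (@le_trans _ _ (\sum_(k < d) `|b k 0 j|)).
    rewrite [leRHS](bigID (fun k => k \in I)) /= lerDl.
    by apply: sumr_ge0.
  apply: ler_sum => k _; rewrite (bigD1 j) //= lerDl.
  by apply: sumr_ge0.
have lam0 : forall j, 0 <= lam j.
  move=> j; rewrite /lam divr_ge0 //; last by nra.
  have := beta_bd j; rewrite ler_norml => /andP[h1 h2]; rewrite /mu; nra.
have lam1 : \sum_j lam j <= 1.
  have lamle : forall j, lam j <= (mu + 2 * N * M) / (2 * N * mu).
    move=> j; rewrite /lam ler_wpM2r // ?invr_ge0; first by nra.
    have := beta_bd j; rewrite ler_norml => /andP[h1 h2]; nra.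
  apply: le_trans (ler_sum _ (fun j _ => lamle j)) _.
  rewrite sumr_const card_ord -[_ *+ #|I|]mulr_natl -/N.
  have -> : N * ((mu + 2 * N * M) / (2 * N * mu)) = (mu + 2 * N * M) / (2 * mu).
    field; apply/andP; split; rewrite gt_eqF //; lra.
  rewrite ler_pdivrMr; last by lra.
  rewrite /mu; lra.
exists (p + \sum_j lam j *: row j A), g.
split.
- split; first by apply: convex_comb => // j; have [] := HA j.
  by apply: span_add.
- by [].
- have key : forall j, mu * lam j = mu / (2 * N) + beta 0 j.
    move=> j; rewrite /lam; field; apply/andP; split; rewrite gt_eqF //; lra.
  rewrite scalerDr scaler_sumr.
  under eq_bigr do rewrite scalerA key scalerDl.
  rewrite big_split /= -scaler_sumr -/ctr -wsum -ygw.
  exact: zid.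
Qed.

Theorem theorem1p3 (R : realType) (d : nat) (K : set 'rV[R]_d) (f : 'M[R]_d) (i : nat) :
  convex_body K -> row_free f -> (1 <= i <= d)%N ->
  (forall I : {set 'I_d}, #|I| = i ->
     set_dim (K `&` span_rows f I) i) ->
  covering_minimum K (lattice_of f) i <=
    \big[Num.max/0]_(I : {set 'I_d} | #|I| == i)
       covering_radius_in (span_rows f I) (K `&` span_rows f I)
                          (lattice_of f `&` span_rows f I).
Proof.
move=> [cK _ _] rf /andP[i1 id] hdim.
set rho := \big[Num.max/0]_(I : {set 'I_d} | #|I| == i) _.
have rho0 : 0 <= rho by apply: bigmax_ge_id.
apply/ler_addgt0Pr => e e0.
rewrite /covering_minimum; apply: ge_inf.
  by exists 0 => m [].
set T := rho + e.
have T0 : 0 < T by rewrite /T; lra.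
split; first exact: ltW.
move=> U [p [B [rB ->]]].
have [I [cI full]] := complement rf rB id.
have /sub_addsmxP [[u1 u2] /= Ep] := full p.
pose q := u2 *m MI f I.
have Lq : span_rows f I q by apply/spanE; exact: submxMl.
have Uq : p + (- u1) *m B = q by rewrite mulNmx Ep (addrC (u1 *m B)) addrK.
have i1' : (1 <= #|I|)%N by rewrite cI.
have hd := (hdim I cI).1; rewrite -cI in hd.
have [mu0 [mu00 hmu0]] := cov_ne cK i1' hd.
set SI := [set mu : R | 0 <= mu /\ dil_plus mu (K `&` span_rows f I)
                         (lattice_of f `&` span_rows f I) = span_rows f I].
have hinfI : has_inf SI by split; [exists mu0 | exists 0 => m []].
have infle : inf SI <= rho.
  apply: (bigmax_sup_seq _ I) => //; first exact: mem_index_enum.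
  by rewrite cI.
have [s [s0 hs] slt] := @inf_adherent _ SI (rho + e - inf SI) ltac:(lra) hinfI.
have sT : s < T by rewrite /T; lra.
have Lq0 := Lq; rewrite -hs in Lq0.
case: Lq0 => c0 [g0 [[Kc0 Lc0] _ _]].
have Lq' : span_rows f I (q - (T - s) *: c0) by apply: span_sub => //; apply: span_scale.
rewrite -hs in Lq'.
case: Lq' => c1 [g1 [[Kc1 Lc1] [Gg1 Lg1] Eq1]].
exists q; split; last by exists (- u1).
exists ((s / T) *: c1 + (1 - s / T) *: c0), g1; split => //.
  apply: cK => //; first by rewrite divr_ge0 // ltW.
  by rewrite ler_pdivrMr // mul1r ltW.
have TsT : T * (s / T) = s by rewrite mulrC divfK // gt_eqF.
rewrite scalerDr !scalerA TsT mulrBr mulr1 TsT.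
by rewrite addrAC -Eq1 subrK.
Qed.
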